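(* Let $x^*$, $\Delta x$, $S^k$, $L_{s,k}f$, $\beta_k$ and $\zeta$ be as defined in the context, with $f\in C^4(I)$ on an open interval $I$ containing all stencil points for small $\Delta x$. Let $d_0=\frac{1}{35}$, $d_1=\frac{12}{35}$, $d_2=\frac{18}{35}$, $d_3=\frac{4}{35}$, let $s\geq 1$ be an integer, and (taking $\epsilon=0$) define the nonlinear weights $$\omega_k=\frac{\alpha_k}{\sum_{q=0}^3\alpha_q},\qquad \alpha_k=d_k\left[1+\left(\frac{\zeta}{\beta_k^2}\right)^{s}\right],\qquad k=0,1,2,3.$$ Then, as $\Delta x\to 0$ (for $\Delta x$ small enough that all $\beta_k>0$ in the cases below): (i) if $f'(x^* )\neq 0$, then $\omega_k=d_k+O(\Delta x^{6s})$; (ii) if $f'(x^* )=0$ and $f''(x^* )\neq0$, then $\omega_k=d_k+O(\Delta x^{4s})$; (iii) if $f'(x^* )=f''(x^* )=0$ and $f'''(x^* )\neq 0$, then $\omega_k=d_k+O(\Delta x^{2s})$. Consequently the condition $\omega_k-d_k=O(\Delta x^4)$ for $k=0,1,2,3$ holds for every $s\ge1$ in cases (i) and (ii), and for every $s\geq 2$ in case (iii).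
   Context: Setup: $x^*\in\mathbb{R}$, $\Delta x>0$, $S^k=\{x^*+(k+i-\tfrac{7}{2})\Delta x : i=0,1,2,3\}$ for $k=0,1,2,3$ (the four 4-point sub-stencils $\{x_{j+k-3},\dots,x_{j+k}\}$ of a uniform grid, with $x^*=x_{j+\frac12}$). For $s'\in\{1,2,3\}$, $L_{s',k}f:=\sum_{x_l\in S^k}c^{[s']}_{k,l}f(x_l)$ where the coefficients uniquely solve $\sum_{x_l\in S^k}c^{[s']}_{k,l}\frac{(x_l-x^* )^m}{m!}=\Delta x^{s'}\delta_{s',m}$ for $m=0,1,2,3$. With fixed parameters $\xi_1,\xi_2\in(0,1]$, $\beta_k=\xi_1|L_{1,k}f|+\xi_2|L_{2,k}f|+|L_{3,k}f|$ and $\zeta=|\beta_0-\beta_3|^2$. The numbers $d_k$ are the ideal (linear) weights of the seventh-order upstream central reconstruction. *)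

(* Defs.v *)
From Stdlib Require Import Reals Lra Arith.
Open Scope R_scope.

(* Stencil point x_{j+k-3+i} = x* + (k + i - 7/2) dx, for i = 0..3 (sub-stencil S^k). *)
Definition pt (xs dx : R) (k i : nat) : R := xs + (INR k + INR i - 7/2) * dx.

(* Coefficient family c dx s' k i  (= c^{[s']}_{k,l} for x_l the i-th point of S^k)
   solves the moment system defining L_{s',k}, for every dx > 0. *)
Definition is_stencil_coeff (xs : R) (c : R -> nat -> nat -> nat -> R) : Prop :=
  forall dx, 0 < dx -> forall sp k m : nat,
    (1 <= sp <= 3)%nat -> (k <= 3)%nat -> (m <= 3)%nat ->
    sum_f_R0 (fun i => c dx sp k i * ((pt xs dx k i - xs) ^ m / INR (Factorial.fact m))) 3
    = dx ^ sp * (if Nat.eqb sp m then 1 else 0).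

Definition Lop (xs : R) (c : R -> nat -> nat -> nat -> R) (f : R -> R)
  (sp k : nat) (dx : R) : R :=
  sum_f_R0 (fun i => c dx sp k i * f (pt xs dx k i)) 3.

Definition beta (xs xi1 xi2 : R) c f (k : nat) (dx : R) : R :=
  xi1 * Rabs (Lop xs c f 1 k dx) + xi2 * Rabs (Lop xs c f 2 k dx)
  + Rabs (Lop xs c f 3 k dx).

Definition zeta (xs xi1 xi2 : R) c f (dx : R) : R :=
  Rabs (beta xs xi1 xi2 c f 0 dx - beta xs xi1 xi2 c f 3 dx) ^ 2.

(* ideal weights of the seventh-order upstream central reconstruction *)
Definition dlin (k : nat) : R :=
  match k with
  | 0%nat => 1/35
  | 1%nat => 12/35
  | 2%nat => 18/35
  | _ => 4/35
  end.

Definition alpha (xs xi1 xi2 : R) c f (s k : nat) (dx : R) : R :=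
  dlin k * (1 + (zeta xs xi1 xi2 c f dx / (beta xs xi1 xi2 c f k dx) ^ 2) ^ s).

Definition omega (xs xi1 xi2 : R) c f (s k : nat) (dx : R) : R :=
  alpha xs xi1 xi2 c f s k dx /
  sum_f_R0 (fun q => alpha xs xi1 xi2 c f s q dx) 3.

Definition bigO0 (g h : R -> R) : Prop :=
  exists C delta, 0 < delta /\
    forall dx, 0 < dx < delta -> Rabs (g dx) <= C * Rabs (h dx).

(* Main.v *)
Require Import Defs.
From Stdlib Require Import Reals Lra Lia.
Open Scope R_scope.

Lemma mom_reform xs dx (c : nat -> R) k m :
  sum_f_R0 (fun i => c i * ((pt xs dx k i - xs) ^ m / INR (Factorial.fact m))) 3
  = dx ^ m / INR (Factorial.fact m) *
    (c 0%nat * (INR k + INR 0 - 7/2) ^ m + c 1%nat * (INR k + INR 1 - 7/2) ^ m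
     + c 2%nat * (INR k + INR 2 - 7/2) ^ m + c 3%nat * (INR k + INR 3 - 7/2) ^ m).
Proof.
  unfold pt. cbn [sum_f_R0].
  assert (HF : INR (Factorial.fact m) <> 0) by (apply INR_fact_neq_0).
  replace (xs + (INR k + INR 0 - 7/2) * dx - xs) with ((INR k + INR 0 - 7/2) * dx) by ring.
  replace (xs + (INR k + INR 1 - 7/2) * dx - xs) with ((INR k + INR 1 - 7/2) * dx) by ring.
  replace (xs + (INR k + INR 2 - 7/2) * dx - xs) with ((INR k + INR 2 - 7/2) * dx) by ring.
  replace (xs + (INR k + INR 3 - 7/2) * dx - xs) with ((INR k + INR 3 - 7/2) * dx) by ring.
  rewrite !Rpow_mult_distr. field. exact HF.
Qed.

Lemma mom_eq xs dx (c : nat -> R) sp k m : 0 < dx ->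
  sum_f_R0 (fun i => c i * ((pt xs dx k i - xs) ^ m / INR (Factorial.fact m))) 3
    = dx ^ sp * (if Nat.eqb sp m then 1 else 0) ->
  c 0%nat * (INR k + INR 0 - 7/2) ^ m + c 1%nat * (INR k + INR 1 - 7/2) ^ m
     + c 2%nat * (INR k + INR 2 - 7/2) ^ m + c 3%nat * (INR k + INR 3 - 7/2) ^ m
  = if Nat.eqb sp m then INR (Factorial.fact m) else 0.
Proof.
  intros Hdx H. rewrite mom_reform in H.
  assert (HF : INR (Factorial.fact m) <> 0) by (apply INR_fact_neq_0).
  assert (HP : dx ^ m <> 0) by (apply pow_nonzero; lra).
  destruct (Nat.eqb sp m) eqn:E.
  - apply Nat.eqb_eq in E; subst.
    apply (Rmult_eq_reg_l (dx ^ m / INR (Factorial.fact m))).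
    + rewrite H. field. exact HF.
    + unfold Rdiv. apply Rmult_integral_contrapositive_currified; auto.
      apply Rinv_neq_0_compat; auto.
  - rewrite Rmult_0_r in H. apply Rmult_integral in H. destruct H as [H|H]; auto.
    exfalso. unfold Rdiv in H. apply Rmult_integral in H. destruct H as [H|H]; auto.
    apply Rinv_neq_0_compat in HF; auto.
Qed.

Lemma coeff_bound xs c : is_stencil_coeff xs c ->
  forall dx, 0 < dx -> forall sp k i, (1 <= sp <= 3)%nat -> (k <= 3)%nat -> (i <= 3)%nat ->
  Rabs (c dx sp k i) <= 7.
Proof.
  intros Hc dx Hdx sp k i Hsp Hk Hi.
  assert (E : forall m, (m <= 3)%nat -> _) by
    (intros m Hm; exact (mom_eq xs dx (c dx sp k) sp k m Hdx (Hc dx Hdx sp k m Hsp Hk Hm))).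
  pose proof (E 0%nat ltac:(lia)) as E0.
  pose proof (E 1%nat ltac:(lia)) as E1.
  pose proof (E 2%nat ltac:(lia)) as E2.
  pose proof (E 3%nat ltac:(lia)) as E3.
  clear E.
  assert (Hsp' : sp = 1%nat \/ sp = 2%nat \/ sp = 3%nat) by lia.
  assert (Hk' : k = 0%nat \/ k = 1%nat \/ k = 2%nat \/ k = 3%nat) by lia.
  assert (Hi' : i = 0%nat \/ i = 1%nat \/ i = 2%nat \/ i = 3%nat) by lia.
  destruct Hsp' as [->|[->| ->]]; destruct Hk' as [->|[->|[->| ->]]];
  simpl in E0, E1, E2, E3;
  destruct Hi' as [->|[->|[->| ->]]]; apply Rabs_le; split; lra.
Qed.

Lemma mvt_bound (g g' : R -> R) K n d : 0 < d -> 0 <= K ->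
  (forall h, Rabs h < d -> derivable_pt_lim g h (g' h)) ->
  (forall h, Rabs h < d -> Rabs (g' h) <= K * Rabs h ^ n) -> g 0 = 0 ->
  forall h, Rabs h < d -> Rabs (g h) <= K * Rabs h ^ S n.
Proof.
  intros Hd HK Hder Hb H0 h Hh.
  destruct (Rtotal_order h 0) as [Hn|[Hz|Hp]].
  - destruct (MVT_cor2 g g' h 0 Hn) as [c0 [E Hc]].
    { intros c0 Hc0. apply Hder. unfold Rabs; destruct (Rcase_abs c0); unfold Rabs in Hh; destruct (Rcase_abs h); lra. }
    rewrite H0 in E.
    assert (Hgh : g h = - (g' c0 * (0 - h))) by lra. rewrite Hgh, Rabs_Ropp, Rabs_mult.
    assert (Hc0 : Rabs c0 < d) by (unfold Rabs in *; destruct (Rcase_abs c0); destruct (Rcase_abs h); lra).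
    pose proof (Hb c0 Hc0).
    assert (Rabs c0 ^ n <= Rabs h ^ n) by (apply pow_incr; split; [apply Rabs_pos| unfold Rabs; destruct (Rcase_abs c0); destruct (Rcase_abs h); lra]).
    replace (Rabs (0 - h)) with (Rabs h) by (rewrite Rminus_0_l, Rabs_Ropp; auto).
    simpl. apply Rle_trans with (K * Rabs c0 ^ n * Rabs h).
    + apply Rmult_le_compat_r; auto. apply Rabs_pos.
    + assert (0 <= Rabs h) by apply Rabs_pos.
      replace (K * (Rabs h * Rabs h ^ n)) with (K * Rabs h ^ n * Rabs h) by ring.
      apply Rmult_le_compat_r; auto. apply Rmult_le_compat_l; auto.
  - subst. rewrite H0, Rabs_R0. simpl. rewrite Rmult_0_l, Rmult_0_r. lra.
  - destruct (MVT_cor2 g g' 0 h Hp) as [c0 [E Hc]].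
    { intros c0 Hc0. apply Hder. unfold Rabs; destruct (Rcase_abs c0); unfold Rabs in Hh; destruct (Rcase_abs h); lra. }
    rewrite H0 in E.
    assert (Hgh : g h = g' c0 * (h - 0)) by lra. rewrite Hgh, Rabs_mult.
    assert (Hc0 : Rabs c0 < d) by (unfold Rabs in *; destruct (Rcase_abs c0); destruct (Rcase_abs h); lra).
    pose proof (Hb c0 Hc0).
    assert (Rabs c0 ^ n <= Rabs h ^ n) by (apply pow_incr; split; [apply Rabs_pos| unfold Rabs; destruct (Rcase_abs c0); destruct (Rcase_abs h); lra]).
    replace (h - 0) with h by ring.
    simpl. apply Rle_trans with (K * Rabs c0 ^ n * Rabs h).
    + apply Rmult_le_compat_r; auto. apply Rabs_pos.
    + assert (0 <= Rabs h) by apply Rabs_pos.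
      replace (K * (Rabs h * Rabs h ^ n)) with (K * Rabs h ^ n * Rabs h) by ring.
      apply Rmult_le_compat_r; auto. apply Rmult_le_compat_l; auto.
Qed.

Lemma dpl_eq f x l l' : derivable_pt_lim f x l -> l = l' -> derivable_pt_lim f x l'.
Proof. intros H ->; exact H. Qed.
Lemma dpl_poly c0 c1 c2 c3 h :
  derivable_pt_lim (fun h => c0 + c1 * h + c2 * h ^ 2 + c3 * h ^ 3) h
    (c1 + 2 * c2 * h + 3 * c3 * h ^ 2).
Proof.
  eapply dpl_eq.
  apply (derivable_pt_lim_plus (fun h => c0 + c1 * h + c2 * h ^ 2) (fun h => c3 * h ^ 3)).
  apply (derivable_pt_lim_plus (fun h => c0 + c1 * h) (fun h => c2 * h ^ 2)).
  apply (derivable_pt_lim_plus (fun h => c0) (fun h => c1 * h)).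
  apply derivable_pt_lim_const.
  apply (derivable_pt_lim_scal (fun h => h)). apply derivable_pt_lim_id.
  apply (derivable_pt_lim_scal (fun h => h ^ 2)). apply derivable_pt_lim_pow.
  apply (derivable_pt_lim_scal (fun h => h ^ 3)). apply derivable_pt_lim_pow.
  simpl. ring.
Qed.

Lemma dpl_shift f xs h l : derivable_pt_lim f (xs + h) l ->
  derivable_pt_lim (fun h => f (xs + h)) h l.
Proof.
  intros H eps Heps. destruct (H eps Heps) as [d Hd]. exists d. intros t Ht Htd.
  rewrite <- Rplus_assoc. apply Hd; auto.
Qed.

Lemma dpl_diff F P F' P' h : derivable_pt_lim F h F' -> derivable_pt_lim P h P' ->
  derivable_pt_lim (fun h => F h - P h) h (F' - P').
Proof. intros H1 H2. exact (derivable_pt_lim_minus F P h F' P' H1 H2). Qed.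

Lemma taylor4 (xs a b : R) (f f1 f2 f3 f4 : R -> R)
  (HI : a < xs < b)
  (Hf1 : forall x, a < x < b -> derivable_pt_lim f x (f1 x))
  (Hf2 : forall x, a < x < b -> derivable_pt_lim f1 x (f2 x))
  (Hf3 : forall x, a < x < b -> derivable_pt_lim f2 x (f3 x))
  (Hf4 : forall x, a < x < b -> derivable_pt_lim f3 x (f4 x))
  (Hf4c : forall x, a < x < b -> continuity_pt f4 x) :
  exists M d, 0 <= M /\ 0 < d /\ forall h, Rabs h < d ->
    Rabs (f (xs + h) - (f xs + f1 xs * h + f2 xs / 2 * h ^ 2 + f3 xs / 6 * h ^ 3))
      <= M * Rabs h ^ 4.
Proof.
  destruct (Hf4c xs HI 1 ltac:(lra)) as [d1 [Hd1 Hc]].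
  set (d := Rmin d1 (Rmin (xs - a) (b - xs))).
  assert (Hd : 0 < d) by (unfold d; repeat apply Rmin_pos; lra).
  assert (Hin : forall h, Rabs h < d -> a < xs + h < b).
  { intros h Hh. assert (d <= xs - a) by (unfold d; eauto using Rle_trans, Rmin_r, Rmin_l).
    assert (d <= b - xs) by (unfold d; eauto using Rle_trans, Rmin_r, Rmin_l).
    unfold Rabs in Hh; destruct (Rcase_abs h); lra. }
  set (M := Rabs (f4 xs) + 1).
  assert (HM4 : forall h, Rabs h < d -> Rabs (f4 (xs + h)) <= M * Rabs h ^ 0).
  { intros h Hh. simpl. rewrite Rmult_1_r. destruct (Req_dec h 0) as [->|Hh0].
    - rewrite Rplus_0_r. unfold M; lra.
    - assert (d <= d1) by apply Rmin_l.
      assert (HH := Hc (xs + h)). simpl in HH. unfold R_dist, D_x, no_cond in HH.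
      assert (Rabs (f4 (xs + h) - f4 xs) < 1).
      { apply HH. split. split; auto. lra. replace (xs + h - xs) with h by ring. lra. }
      pose proof (Rabs_triang_inv (f4 (xs + h)) (f4 xs)). unfold M; lra. }
  exists M, d. split; [unfold M; pose proof (Rabs_pos (f4 xs)); lra|]. split; auto.
  assert (HM : 0 <= M) by (unfold M; pose proof (Rabs_pos (f4 xs)); lra).
  set (g3 := fun h => f3 (xs + h) - (f3 xs + 0 * h + 0 * h ^ 2 + 0 * h ^ 3)).
  set (g2 := fun h => f2 (xs + h) - (f2 xs + f3 xs * h + 0 * h ^ 2 + 0 * h ^ 3)).
  set (g1 := fun h => f1 (xs + h) - (f1 xs + f2 xs * h + f3 xs / 2 * h ^ 2 + 0 * h ^ 3)).
  set (g0 := fun h => f (xs + h) - (f xs + f1 xs * h + f2 xs / 2 * h ^ 2 + f3 xs / 6 * h ^ 3)).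
  assert (B3 : forall h, Rabs h < d -> Rabs (g3 h) <= M * Rabs h ^ 1).
  { apply (mvt_bound g3 (fun h => f4 (xs + h))); auto.
    - intros h Hh. eapply dpl_eq. apply dpl_diff. apply dpl_shift, Hf4, Hin, Hh. apply dpl_poly. cbv beta. ring_simplify. reflexivity.
    - unfold g3. rewrite Rplus_0_r. ring. }
  assert (B2 : forall h, Rabs h < d -> Rabs (g2 h) <= M * Rabs h ^ 2).
  { apply (mvt_bound g2 g3); auto.
    - intros h Hh. eapply dpl_eq. apply dpl_diff. apply dpl_shift, Hf3, Hin, Hh. apply dpl_poly. unfold g3; ring.
    - unfold g2. rewrite Rplus_0_r. ring. }
  assert (B1 : forall h, Rabs h < d -> Rabs (g1 h) <= M * Rabs h ^ 3).
  { apply (mvt_bound g1 g2); auto.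
    - intros h Hh. eapply dpl_eq. apply dpl_diff. apply dpl_shift, Hf2, Hin, Hh. apply dpl_poly. unfold g2; field.
    - unfold g1. rewrite Rplus_0_r. ring. }
  assert (B0 : forall h, Rabs h < d -> Rabs (g0 h) <= M * Rabs h ^ 4).
  { apply (mvt_bound g0 g1); auto.
    - intros h Hh. eapply dpl_eq. apply dpl_diff. apply dpl_shift, Hf1, Hin, Hh. apply dpl_poly. unfold g1; field.
    - unfold g0. rewrite Rplus_0_r. ring. }
  exact B0.
Qed.

Lemma pow_small x m n : 0 <= x <= 1 -> (m <= n)%nat -> x ^ n <= x ^ m.
Proof.
  intros Hx Hmn. replace n with (m + (n - m))%nat by lia. rewrite pow_add.
  assert (x ^ (n - m) <= 1) by (rewrite <- (pow1 (n - m)); apply pow_incr; lra).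
  assert (0 <= x ^ m) by (apply pow_le; lra). nra.
Qed.

Lemma bigO_mono g m n : (m <= n)%nat -> bigO0 g (fun dx => dx ^ n) -> bigO0 g (fun dx => dx ^ m).
Proof.
  intros Hmn [C [d [Hd H]]]. exists (Rabs C), (Rmin d 1). split; [apply Rmin_pos; lra|].
  intros dx Hdx. assert (Rmin d 1 <= d) by apply Rmin_l. assert (Rmin d 1 <= 1) by apply Rmin_r.
  apply Rle_trans with (C * Rabs (dx ^ n)). apply H; lra.
  rewrite (Rabs_pos_eq (dx ^ n)) by (apply pow_le; lra).
  rewrite (Rabs_pos_eq (dx ^ m)) by (apply pow_le; lra).
  assert (dx ^ n <= dx ^ m) by (apply pow_small; auto; lra).
  assert (0 <= dx ^ n) by (apply pow_le; lra).
  apply Rle_trans with (Rabs C * dx ^ n).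
  apply Rmult_le_compat_r; auto; apply Rle_abs.
  apply Rmult_le_compat_l; auto; apply Rabs_pos.
Qed.

Lemma absdiv_le x y B : 0 < y -> 1 <= y -> Rabs x <= B -> Rabs (x / y) <= B.
Proof.
  intros Hy H1 Hx. unfold Rdiv. rewrite Rabs_mult, Rabs_inv, (Rabs_pos_eq y) by lra.
  assert (/ y <= 1) by (rewrite <- Rinv_1; apply Rinv_le_contravar; lra).
  assert (0 < / y) by (apply Rinv_0_lt_compat; lra).
  pose proof (Rabs_pos x). nra.
Qed.

Lemma weights (r : nat -> R) Rb k : (forall q, (q <= 3)%nat -> 0 <= r q <= Rb) -> (k <= 3)%nat ->
  Rabs (dlin k * (1 + r k) / sum_f_R0 (fun q => dlin q * (1 + r q)) 3 - dlin k) <= 2 * Rb.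
Proof.
  intros Hr Hk. cbn [sum_f_R0].
  replace (dlin 0) with (1/35) by reflexivity. replace (dlin 1) with (12/35) by reflexivity.
  replace (dlin 2) with (18/35) by reflexivity. replace (dlin 3) with (4/35) by reflexivity.
  pose proof (Hr 0%nat ltac:(lia)). pose proof (Hr 1%nat ltac:(lia)).
  pose proof (Hr 2%nat ltac:(lia)). pose proof (Hr 3%nat ltac:(lia)).
  set (S := 1/35 * r 0%nat + 12/35 * r 1%nat + 18/35 * r 2%nat + 4/35 * r 3%nat).
  assert (HS : 0 <= S <= Rb) by (unfold S; lra).
  assert (HRS : 0 <= Rb * S) by (apply Rmult_le_pos; lra).
  replace (1 / 35 * (1 + r 0%nat) + 12 / 35 * (1 + r 1%nat) + 18 / 35 * (1 + r 2%nat) +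
     4 / 35 * (1 + r 3%nat)) with (1 + S)  by (unfold S; lra).
  assert (Hk' : k = 0%nat \/ k = 1%nat \/ k = 2%nat \/ k = 3%nat) by lia.
  destruct Hk' as [-> | [-> | [-> | ->]]]; cbn [dlin];
  match goal with |- Rabs (?a * (1 + ?rk) / (1 + S) - ?a) <= _ =>
    replace (a * (1 + rk) / (1 + S) - a) with (a * (rk - S) / (1 + S)) by (field; lra);
    apply absdiv_le; [lra | lra | apply Rabs_le; split; lra] end.
Qed.


Definition Dv (f1 f2 f3 : R -> R) (xs : R) (sp : nat) : R :=
  match sp with 1%nat => f1 xs | 2%nat => f2 xs | _ => f3 xs end.

Lemma lop_err xs c f f1 f2 f3 M d :
  is_stencil_coeff xs c -> 0 <= M -> 0 < d ->
  (forall h, Rabs h < d ->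
    Rabs (f (xs + h) - (f xs + f1 xs * h + f2 xs / 2 * h ^ 2 + f3 xs / 6 * h ^ 3))
      <= M * Rabs h ^ 4) ->
  forall dx, 0 < dx < d / 4 -> forall sp k, (1 <= sp <= 3)%nat -> (k <= 3)%nat ->
  Rabs (Lop xs c f sp k dx - dx ^ sp * Dv f1 f2 f3 xs sp) <= 28 * M * (7/2) ^ 4 * dx ^ 4.
Proof.
  intros Hc HM Hd HT dx Hdx sp k Hsp Hk.
  set (T := fun i => f xs * ((pt xs dx k i - xs) ^ 0 / INR (Factorial.fact 0))
    + f1 xs * ((pt xs dx k i - xs) ^ 1 / INR (Factorial.fact 1))
    + f2 xs * ((pt xs dx k i - xs) ^ 2 / INR (Factorial.fact 2))
    + f3 xs * ((pt xs dx k i - xs) ^ 3 / INR (Factorial.fact 3))).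
  assert (HR : forall i, (i <= 3)%nat -> Rabs (f (pt xs dx k i) - T i) <= M * ((7/2) ^ 4 * dx ^ 4)).
  { intros i Hi. set (h := pt xs dx k i - xs).
    assert (Hk3 : 0 <= INR k <= 3) by (split; [apply pos_INR| replace 3 with (INR 3) by (simpl; lra); apply le_INR; lia]).
    assert (Hi3 : 0 <= INR i <= 3) by (split; [apply pos_INR| replace 3 with (INR 3) by (simpl; lra); apply le_INR; lia]).
    assert (Hh : Rabs h <= 7/2 * dx).
    { unfold h, pt. replace (xs + (INR k + INR i - 7 / 2) * dx - xs) with ((INR k + INR i - 7 / 2) * dx) by ring.
      rewrite Rabs_mult, (Rabs_pos_eq dx) by lra. apply Rmult_le_compat_r; [lra|].
      apply Rabs_le; split; lra. }
    assert (Hpt : pt xs dx k i = xs + h) by (unfold h; ring).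
    assert (HTi : T i = f xs + f1 xs * h + f2 xs / 2 * h ^ 2 + f3 xs / 6 * h ^ 3).
    { unfold T. fold h. simpl. field. }
    rewrite HTi, Hpt. eapply Rle_trans. apply HT. lra.
    apply Rmult_le_compat_l; auto. rewrite <- Rpow_mult_distr. apply pow_incr.
    split; [apply Rabs_pos| lra]. }
  assert (Hm : forall m, (m <= 3)%nat -> _) by
    (intros m Hm; exact (Hc dx ltac:(lra) sp k m Hsp Hk Hm)).
  pose proof (Hm 0%nat ltac:(lia)) as H0. pose proof (Hm 1%nat ltac:(lia)) as H1.
  pose proof (Hm 2%nat ltac:(lia)) as H2. pose proof (Hm 3%nat ltac:(lia)) as H3.
  clear Hm. cbn [sum_f_R0] in H0, H1, H2, H3.
  assert (HS : c dx sp k 0%nat * T 0%nat + c dx sp k 1%nat * T 1%nat + c dx sp k 2%nat * T 2%nat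
     + c dx sp k 3%nat * T 3%nat = dx ^ sp * Dv f1 f2 f3 xs sp).
  { transitivity (f xs * (dx ^ sp * (if Nat.eqb sp 0 then 1 else 0))
      + f1 xs * (dx ^ sp * (if Nat.eqb sp 1 then 1 else 0))
      + f2 xs * (dx ^ sp * (if Nat.eqb sp 2 then 1 else 0))
      + f3 xs * (dx ^ sp * (if Nat.eqb sp 3 then 1 else 0))).
    - rewrite <- H0, <- H1, <- H2, <- H3. unfold T. ring.
    - assert (Hsp' : sp = 1%nat \/ sp = 2%nat \/ sp = 3%nat) by lia.
      destruct Hsp' as [-> | [-> | ->]]; simpl; ring. }
  unfold Lop. cbn [sum_f_R0]. rewrite <- HS.
  replace (c dx sp k 0%nat * f (pt xs dx k 0) + c dx sp k 1%nat * f (pt xs dx k 1) +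
   c dx sp k 2%nat * f (pt xs dx k 2) + c dx sp k 3%nat * f (pt xs dx k 3) -
   (c dx sp k 0%nat * T 0%nat + c dx sp k 1%nat * T 1%nat + c dx sp k 2%nat * T 2%nat +
    c dx sp k 3%nat * T 3%nat))
  with (c dx sp k 0%nat * (f (pt xs dx k 0) - T 0%nat) + c dx sp k 1%nat * (f (pt xs dx k 1) - T 1%nat)
   + c dx sp k 2%nat * (f (pt xs dx k 2) - T 2%nat) + c dx sp k 3%nat * (f (pt xs dx k 3) - T 3%nat)) by ring.
  assert (Hb : forall i, (i <= 3)%nat ->
    Rabs (c dx sp k i * (f (pt xs dx k i) - T i)) <= 7 * (M * ((7/2) ^ 4 * dx ^ 4))).
  { intros i Hi. rewrite Rabs_mult. apply Rmult_le_compat; try apply Rabs_pos.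
    apply (coeff_bound xs c Hc dx ltac:(lra)); auto. apply HR; auto. }
  pose proof (Hb 0%nat ltac:(lia)). pose proof (Hb 1%nat ltac:(lia)).
  pose proof (Hb 2%nat ltac:(lia)). pose proof (Hb 3%nat ltac:(lia)).
  match goal with |- Rabs (?a + ?b + ?c + ?d) <= _ =>
    pose proof (Rabs_triang (a + b + c) d); pose proof (Rabs_triang (a + b) c);
    pose proof (Rabs_triang a b) end.
  lra.
Qed.


Lemma abs_bounds a b : Rabs a <= b -> - b <= a <= b.
Proof. intros H. pose proof (Rle_abs a). pose proof (Rle_abs (- a)). rewrite Rabs_Ropp in *. lra. Qed.

Lemma case_bound xs xi1 xi2 c f (D : nat -> R) K del s k p gam :
  0 < xi1 <= 1 -> 0 < xi2 <= 1 -> 0 <= K -> 0 < del -> (k <= 3)%nat -> (1 <= p <= 3)%nat ->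
  0 < gam -> D p <> 0 ->
  (forall q dx, gam * Rabs (Lop xs c f p q dx) <= beta xs xi1 xi2 c f q dx) ->
  (forall dx, 0 < dx < del -> forall sp q, (1 <= sp <= 3)%nat -> (q <= 3)%nat ->
     Rabs (Lop xs c f sp q dx - dx ^ sp * D sp) <= K * dx ^ 4) ->
  bigO0 (fun dx => omega xs xi1 xi2 c f s k dx - dlin k) (fun dx => dx ^ ((8 - 2 * p) * s)).
Proof.
  intros Hx1 Hx2 HK Hdel Hk Hp Hgam HD Hbeta Herr.
  set (Dp := Rabs (D p)).
  assert (HDp : 0 < Dp) by (apply Rabs_pos_lt; auto).
  set (b := gam * Dp / 2). assert (Hb : 0 < b) by (unfold b; nra).
  set (Z := 36 * K ^ 2).
  set (A := Z / b ^ 2).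
  assert (HA : 0 <= A) by (unfold A, Z; apply Rmult_le_pos; [nra| left; apply Rinv_0_lt_compat; nra]).
  exists (2 * A ^ s), (Rmin del (Rmin 1 (Dp / (2 * K + 2)))).
  split. { repeat apply Rmin_pos; try lra. apply Rdiv_lt_0_compat; lra. }
  intros dx Hdx.
  assert (Hm1 : Rmin del (Rmin 1 (Dp / (2 * K + 2))) <= del) by apply Rmin_l.
  assert (Hm2 : Rmin del (Rmin 1 (Dp / (2 * K + 2))) <= Rmin 1 (Dp / (2 * K + 2))) by apply Rmin_r.
  assert (Hm3 : Rmin 1 (Dp / (2 * K + 2)) <= 1) by apply Rmin_l.
  assert (Hm4 : Rmin 1 (Dp / (2 * K + 2)) <= Dp / (2 * K + 2)) by apply Rmin_r.
  assert (Hdx0 : 0 < dx < del) by lra.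
  assert (Hdx1 : dx < 1) by lra.
  assert (HKdx : K * dx <= Dp / 2).
  { assert (dx * (2 * K + 2) <= Dp).
    { assert (dx <= Dp / (2 * K + 2)) by lra.
      apply (Rmult_le_compat_r (2 * K + 2)) in H; [|lra].
      unfold Rdiv in H. rewrite Rmult_assoc, Rinv_l in H by lra. lra. }
    nra. }
  set (E4 := K * dx ^ 4).
  assert (HE4 : 0 <= E4) by (unfold E4; apply Rmult_le_pos; [lra| apply pow_le; lra]).
  assert (Hdiff : forall sp, (1 <= sp <= 3)%nat ->
     Rabs (Rabs (Lop xs c f sp 0 dx) - Rabs (Lop xs c f sp 3 dx)) <= 2 * E4).
  { intros sp Hsp. eapply Rle_trans. apply Rabs_triang_inv2.
    replace (Lop xs c f sp 0 dx - Lop xs c f sp 3 dx) with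
      ((Lop xs c f sp 0 dx - dx ^ sp * D sp) - (Lop xs c f sp 3 dx - dx ^ sp * D sp)) by ring.
    eapply Rle_trans. apply Rabs_triang. rewrite Rabs_Ropp.
    pose proof (Herr dx Hdx0 sp 0%nat Hsp ltac:(lia)).
    pose proof (Herr dx Hdx0 sp 3%nat Hsp ltac:(lia)). unfold E4; lra. }
  pose proof (Hdiff 1%nat ltac:(lia)) as D1.
  pose proof (Hdiff 2%nat ltac:(lia)) as D2.
  pose proof (Hdiff 3%nat ltac:(lia)) as D3.
  apply abs_bounds in D1. apply abs_bounds in D2. apply abs_bounds in D3.
  assert (HB03 : Rabs (beta xs xi1 xi2 c f 0 dx - beta xs xi1 xi2 c f 3 dx) <= 6 * E4).
  { unfold beta. apply Rabs_le.
    set (a1 := Rabs (Lop xs c f 1 0 dx) - Rabs (Lop xs c f 1 3 dx)) in *.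
    set (a2 := Rabs (Lop xs c f 2 0 dx) - Rabs (Lop xs c f 2 3 dx)) in *.
    set (a3 := Rabs (Lop xs c f 3 0 dx) - Rabs (Lop xs c f 3 3 dx)) in *.
    replace (xi1 * Rabs (Lop xs c f 1 0 dx) + xi2 * Rabs (Lop xs c f 2 0 dx) + Rabs (Lop xs c f 3 0 dx) -
     (xi1 * Rabs (Lop xs c f 1 3 dx) + xi2 * Rabs (Lop xs c f 2 3 dx) + Rabs (Lop xs c f 3 3 dx)))
     with (xi1 * a1 + xi2 * a2 + a3) by (unfold a1, a2, a3; ring).
    split; nra. }
  assert (Hz : zeta xs xi1 xi2 c f dx <= Z * dx ^ 8).
  { unfold zeta. apply Rle_trans with ((6 * E4) ^ 2).
    apply pow_incr. split; [apply Rabs_pos| auto].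
    unfold E4, Z. replace 8%nat with (4 * 2)%nat by reflexivity. rewrite pow_mult. right. ring. }
  assert (Hz0 : 0 <= zeta xs xi1 xi2 c f dx) by (unfold zeta; apply pow_le, Rabs_pos).
  set (P := dx ^ p). assert (HP : 0 < P) by (unfold P; apply pow_lt; lra).
  assert (HQ : dx ^ 4 = P * (dx * dx ^ (3 - p))).
  { unfold P. rewrite tech_pow_Rmult, <- pow_add. f_equal. lia. }
  assert (HQ1 : dx ^ (3 - p) <= 1) by (rewrite <- (pow1 (3 - p)); apply pow_incr; lra).
  assert (HQ0 : 0 <= dx ^ (3 - p)) by (apply pow_le; lra).
  assert (Hbeta_lb : forall q, (q <= 3)%nat -> b * P <= beta xs xi1 xi2 c f q dx).
  { intros q Hq. eapply Rle_trans; [|apply Hbeta].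
    assert (HL : Dp * P / 2 <= Rabs (Lop xs c f p q dx)).
    { pose proof (Herr dx Hdx0 p q Hp Hq) as He.
      pose proof (Rabs_triang_inv (dx ^ p * D p) (dx ^ p * D p - Lop xs c f p q dx)) as Ht.
      replace (dx ^ p * D p - (dx ^ p * D p - Lop xs c f p q dx)) with (Lop xs c f p q dx) in Ht by ring.
      rewrite Rabs_mult, (Rabs_pos_eq (dx ^ p)) in Ht by (fold P; lra). fold P Dp in Ht.
      rewrite <- Rabs_Ropp in He. replace (- (Lop xs c f p q dx - dx ^ p * D p)) with
        (dx ^ p * D p - Lop xs c f p q dx) in He by ring.
      rewrite HQ in He.
      assert (K * (dx * dx ^ (3 - p)) <= Dp / 2).
      { assert (0 <= dx) by lra.
        assert (dx * dx ^ (3 - p) <= dx) by nra. nra. }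
      fold P in He.
      assert (K * (P * (dx * dx ^ (3 - p))) <= P * (Dp / 2)).
      { rewrite <- Rmult_assoc, (Rmult_comm K P), Rmult_assoc. apply Rmult_le_compat_l; lra. }
      lra. }
    unfold b. nra. }
  set (X := dx ^ (8 - 2 * p)).
  assert (HX0 : 0 <= X) by (unfold X; apply pow_le; lra).
  assert (H8 : dx ^ 8 = X * P ^ 2).
  { unfold X, P. rewrite <- pow_mult, <- pow_add. f_equal. lia. }
  assert (Hr : forall q, (q <= 3)%nat ->
     0 <= (zeta xs xi1 xi2 c f dx / beta xs xi1 xi2 c f q dx ^ 2) ^ s <= A ^ s * X ^ s).
  { intros q Hq. pose proof (Hbeta_lb q Hq) as Hbq.
    assert (Hbp : 0 < b * P) by nra.
    assert (Hrat : 0 <= zeta xs xi1 xi2 c f dx / beta xs xi1 xi2 c f q dx ^ 2 <= A * X).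
    { split. unfold Rdiv. apply Rmult_le_pos; auto. left; apply Rinv_0_lt_compat, pow_lt; lra.
      apply Rle_trans with (zeta xs xi1 xi2 c f dx / (b * P) ^ 2).
      - unfold Rdiv. apply Rmult_le_compat_l; auto. apply Rinv_le_contravar. apply pow_lt; lra.
        apply pow_incr; lra.
      - apply Rle_trans with (Z * dx ^ 8 / (b * P) ^ 2).
        + unfold Rdiv. apply Rmult_le_compat_r; auto. left; apply Rinv_0_lt_compat, pow_lt; lra.
        + rewrite H8. unfold A. right. field. split; lra. }
    split. apply pow_le; lra.
    rewrite <- Rpow_mult_distr. apply pow_incr. auto. }
  pose proof (weights (fun q => (zeta xs xi1 xi2 c f dx / beta xs xi1 xi2 c f q dx ^ 2) ^ s)
    (A ^ s * X ^ s) k Hr Hk) as HW.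
  unfold omega, alpha. eapply Rle_trans. exact HW.
  rewrite Rabs_pos_eq by (apply pow_le; lra).
  unfold X. rewrite <- pow_mult. right. ring.
Qed.

Theorem mainTheorem3
  (xs a b : R) (f f1 f2 f3 f4 : R -> R) (xi1 xi2 : R)
  (c : R -> nat -> nat -> nat -> R)
  (HI : a < xs < b)
  (Hf1 : forall x, a < x < b -> derivable_pt_lim f x (f1 x))
  (Hf2 : forall x, a < x < b -> derivable_pt_lim f1 x (f2 x))
  (Hf3 : forall x, a < x < b -> derivable_pt_lim f2 x (f3 x))
  (Hf4 : forall x, a < x < b -> derivable_pt_lim f3 x (f4 x))
  (Hf4c : forall x, a < x < b -> continuity_pt f4 x)
  (Hxi1 : 0 < xi1 <= 1) (Hxi2 : 0 < xi2 <= 1)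
  (Hc : is_stencil_coeff xs c) :
  forall (s k : nat), (1 <= s)%nat -> (k <= 3)%nat ->
    let w := fun dx => omega xs xi1 xi2 c f s k dx - dlin k in
    (* (i) *)
    (f1 xs <> 0 -> bigO0 w (fun dx => dx ^ (6 * s))) /\
    (* (ii) *)
    (f1 xs = 0 -> f2 xs <> 0 -> bigO0 w (fun dx => dx ^ (4 * s))) /\
    (* (iii) *)
    (f1 xs = 0 -> f2 xs = 0 -> f3 xs <> 0 -> bigO0 w (fun dx => dx ^ (2 * s))) /\
    (* consequence *)
    (f1 xs <> 0 -> bigO0 w (fun dx => dx ^ 4)) /\
    (f1 xs = 0 -> f2 xs <> 0 -> bigO0 w (fun dx => dx ^ 4)) /\
    (f1 xs = 0 -> f2 xs = 0 -> f3 xs <> 0 -> (2 <= s)%nat ->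
       bigO0 w (fun dx => dx ^ 4)).

Proof.
  intros s k Hs Hk w.
  destruct (taylor4 xs a b f f1 f2 f3 f4 HI Hf1 Hf2 Hf3 Hf4 Hf4c) as [M [d [HM [Hd HT]]]].
  set (K := 28 * M * (7/2) ^ 4).
  assert (HK : 0 <= K) by (unfold K; nra).
  assert (Herr : forall dx, 0 < dx < d / 4 -> forall sp q, (1 <= sp <= 3)%nat -> (q <= 3)%nat ->
     Rabs (Lop xs c f sp q dx - dx ^ sp * Dv f1 f2 f3 xs sp) <= K * dx ^ 4).
  { intros dx Hdx sp q Hsp Hq. exact (lop_err xs c f f1 f2 f3 M d Hc HM Hd HT dx Hdx sp q Hsp Hq). }
  assert (Hd4 : 0 < d / 4) by lra.
  assert (B1 : forall q dx, xi1 * Rabs (Lop xs c f 1 q dx) <= beta xs xi1 xi2 c f q dx).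
  { intros q dx. unfold beta. pose proof (Rabs_pos (Lop xs c f 2 q dx)).
    pose proof (Rabs_pos (Lop xs c f 3 q dx)). nra. }
  assert (B2 : forall q dx, xi2 * Rabs (Lop xs c f 2 q dx) <= beta xs xi1 xi2 c f q dx).
  { intros q dx. unfold beta. pose proof (Rabs_pos (Lop xs c f 1 q dx)).
    pose proof (Rabs_pos (Lop xs c f 3 q dx)). nra. }
  assert (B3 : forall q dx, 1 * Rabs (Lop xs c f 3 q dx) <= beta xs xi1 xi2 c f q dx).
  { intros q dx. unfold beta. pose proof (Rabs_pos (Lop xs c f 1 q dx)).
    pose proof (Rabs_pos (Lop xs c f 2 q dx)). nra. }
  assert (C1 : f1 xs <> 0 -> bigO0 w (fun dx => dx ^ (6 * s))).
  { intros H. replace (6 * s)%nat with ((8 - 2 * 1) * s)%nat by lia.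
    apply (case_bound xs xi1 xi2 c f (Dv f1 f2 f3 xs) K (d / 4) s k 1 xi1); auto; lia || lra. }
  assert (C2 : f2 xs <> 0 -> bigO0 w (fun dx => dx ^ (4 * s))).
  { intros H. replace (4 * s)%nat with ((8 - 2 * 2) * s)%nat by lia.
    apply (case_bound xs xi1 xi2 c f (Dv f1 f2 f3 xs) K (d / 4) s k 2 xi2); auto; lia || lra. }
  assert (C3 : f3 xs <> 0 -> bigO0 w (fun dx => dx ^ (2 * s))).
  { intros H. replace (2 * s)%nat with ((8 - 2 * 3) * s)%nat by lia.
    apply (case_bound xs xi1 xi2 c f (Dv f1 f2 f3 xs) K (d / 4) s k 3 1); auto; lia || lra. }
  split; [auto|]. split; [auto|]. split; [auto|].
  split. { intros H. apply (bigO_mono w 4 (6 * s)); [lia| auto]. }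
  split. { intros H H'. apply (bigO_mono w 4 (4 * s)); [lia| auto]. }
  intros H H' H'' Hs2. apply (bigO_mono w 4 (2 * s)); [lia| auto].
Qed.
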